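(* Assume the setting and hypotheses below (with $d=2$). For $x\in X$, $t\in\mathbb{R}^2$ and $N\in\mathbb{N}$ let $\ell(x,t,N)=\mathrm{Card}(n\in\{0,1,\dots,N\}:\|\tau_n(x)-t\|\le1)$. Then for each $p\in\mathbb{N}$ there is a constant $C_p$ such that for each $t\in\mathbb{R}^2$ and each integer $N\ge2$, $\int_X\ell^p(x,t,N)\,d\mu(x)\le C_p\ln^pN$.
   Context: Setting: $f:X\to X$ smooth map of a manifold preserving a probability $\mu$, ergodic, satisfying the CLT for smooth observables; $(G_t)_{t\in\mathbb{R}^2}$ an $\mathbb{R}^2$ action on a manifold $Y$ preserving a probability $\nu$ enjoying multiple exponential mixing of all orders; $\tau:X\to\mathbb{R}^2$ smooth with $\tau_n=\sum_{k=0}^{n-1}\tau\circ f^k$, satisfying the MMLLT (multiple mixing local limit theorem with a non-degenerate Gaussian density) and the anticoncentration large deviation bound: for every $s\ge1$ there are $K$ and a decreasing $\Theta$ with $\int_1^\infty\Theta(r)r^2dr<\infty$ such that for all integers $0=n_0<n_1<\dots<n_s$ and unit cubes $C_j$ centered at $c_j$ ($c_0=0$), $\mu(x:\tau_{n_j}(x)\in C_j,\ j=1,\dots,s)\le K\prod_{j=1}^s(n_j-n_{j-1})^{-1}\Theta\left(\max_j\frac{\|c_j-c_{j-1}\|}{\sqrt{n_j-n_{j-1}}}\right)$. *)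

(* Defs.v *)
From HB Require Import structures.
From mathcomp Require Import all_boot all_order all_algebra.
From mathcomp Require Import all_classical all_reals all_analysis.
Set Implicit Arguments. Unset Strict Implicit. Unset Printing Implicit Defensive.
Import Order.TTheory GRing.Theory Num.Theory.
Local Open Scope classical_set_scope.
Local Open Scope ring_scope.

Section Defs.
Context {d : measure_display} {X : measurableType d} {R : realType}.

Definition dist2 (u v : R * R) : R :=
  Num.sqrt ((u.1 - v.1) ^+ 2 + (u.2 - v.2) ^+ 2).

Definition birkhoff (f : X -> X) (tau : X -> R * R) (n : nat) (x : X) : R * R :=
  (\sum_(k < n) (tau (iter k f x)).1, \sum_(k < n) (tau (iter k f x)).2).

Definition unit_cube (c : R * R) : set (R * R) :=
  [set y | `|y.1 - c.1| <= 2^-1 /\ `|y.2 - c.2| <= 2^-1].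

Definition ell (f : X -> X) (tau : X -> R * R) (x : X) (t : R * R) (N : nat) : nat :=
  count (fun n => dist2 (birkhoff f tau n x) t <= 1) (iota 0 N.+1).

Definition measure_preserving (mu : probability X R) (f : X -> X) : Prop :=
  measurable_fun setT f /\
  forall A, measurable A -> mu (f @^-1` A) = mu A.

Definition ergodic (mu : probability X R) (f : X -> X) : Prop :=
  forall A, measurable A -> f @^-1` A = A -> mu A = 0%E \/ mu A = 1%E.

Definition anticoncentration (mu : probability X R) (f : X -> X)
    (tau : X -> R * R) : Prop :=
  forall s : nat, (1 <= s)%N ->
  exists (K : R) (Theta : R -> R),
    (forall a b : R, 0 <= a -> a <= b -> Theta b <= Theta a) /\
    (lebesgue_measure).-integrable `[1, +oo[%classic
        (fun r : R => (Theta r * r ^+ 2)%:E) /\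
    forall (n : nat -> nat) (c : nat -> R * R),
      n 0%N = 0%N -> c 0%N = (0, 0) ->
      (forall j, (j < s)%N -> (n j < n j.+1)%N) ->
      (mu [set x | forall j, (1 <= j <= s)%N ->
                     unit_cube (c j) (birkhoff f tau (n j) x)]
       <= (K * (\prod_(1 <= j < s.+1) ((n j - n j.-1)%:R)^-1)
             * Theta (\big[Num.max/0]_(1 <= j < s.+1)
                        (dist2 (c j) (c j.-1) / Num.sqrt ((n j - n j.-1)%:R))))%:E)%E.

End Defs.

(* Main.v *)
Require Import Defs.
From HB Require Import structures.
From mathcomp Require Import all_boot all_order all_algebra.
From mathcomp Require Import all_classical all_reals all_analysis.
From mathcomp Require Import measurable_realfun.
From mathcomp Require Import zify ring lra.
Set Implicit Arguments. Unset Strict Implicit. Unset Printing Implicit Defensive.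
Import Order.TTheory GRing.Theory Num.Theory.
Local Open Scope classical_set_scope.
Local Open Scope ring_scope.

Section NatComb.
Local Open Scope nat_scope.
Lemma pow_le_ffact k c z : k <= c -> c <= z -> (z ^ k <= c ^ k * z ^_ k)%N.
Proof.
elim: k => [|k IH] hk hz; first by rewrite ffactn0.
rewrite ffactnSr expnS [c ^ k.+1]expnS.
have h1 := IH (ltnW hk) hz.
have h2 : (z <= c * (z - k))%N by nia.
have h3 := leq_mul h1 h2.
nia.
Qed.
Lemma pow_le_bin p z : ((1 + z) ^ p <= (2 * p) ^ p * p`! * (1 + 'C(z, p)))%N.
Proof.
case: (ltnP z p) => hz.
  apply: (@leq_trans (p ^ p)).
    by rewrite leq_exp2r; lia.
  rewrite mulnDr muln1; apply: leq_trans (leq_addr _ _).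
  rewrite expnMn.
  have := leq_mul (leq_mul (expn_gt0 2 p) (leqnn (p^p))) (fact_gt0 p).
  by rewrite mul1n muln1.
apply: (@leq_trans ((2 * z) ^ p)).
  case: p hz => [|p] hz; first by [].
  by rewrite leq_exp2r; lia.
rewrite mulnDr muln1; apply: leq_trans (leq_addl _ _).
rewrite !expnMn -!mulnA leq_mul2l; apply/orP; right.
by rewrite [p`! * _]mulnC bin_ffact; exact: pow_le_ffact.
Qed.

End NatComb.

Section Comb.
Local Open Scope nat_scope.
Variables (hit : nat -> bool) (N : nat).
Fixpoint chains (k a : nat) : nat :=
  match k with
  | 0 => 1
  | k'.+1 => \sum_(a <= m < N.+1) hit m * chains k' m.+1
  end.

Lemma chainsE k a : chains k a = 'C(\sum_(a <= m < N.+1) hit m, k).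
Proof.
elim: k a => [|k IH] a /=; first by rewrite bin0.
have H : forall n b, N.+1 - b = n -> \sum_(b <= m < N.+1) hit m * chains k m.+1
   = 'C(\sum_(b <= m < N.+1) hit m, k.+1).
  elim=> [|n IHn] b hb.
    by rewrite !big_geq ?bin0n //; lia.
  rewrite big_ltn; last by lia.
  rewrite [in RHS]big_ltn; last by lia.
  rewrite IHn; last by lia.
  rewrite IH; case: (hit b) => /=; last by rewrite mul0n add0n.
  by rewrite mul1n add1n binS addnC.
exact: H.
Qed.
End Comb.

Lemma harm_ln (R : realType) (N : nat) : (1 <= N)%N ->
  \sum_(1 <= g < N.+1) (g%:R : R)^-1 <= 1 + ln (N%:R : R).
Proof.
elim: N => [//|N IH] _.
rewrite big_nat_recr //=.
case: N IH => [|N] IH.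
  by rewrite big_geq // add0r ln1 addr0 invr1.
have {}IH := IH isT.
set n := N.+1 in IH *.
have hn : (0 : R) < n%:R by rewrite ltr0n.
have key : (n.+1%:R : R)^-1 <= ln (n.+1%:R : R) - ln (n%:R).
  have h := @le_ln1Dx R (- (n.+1%:R)^-1).
  have e : 1 + - (n.+1%:R : R)^-1 = n%:R / n.+1%:R.
    have hm : (n.+1%:R : R) = n%:R + 1 by rewrite -addn1 natrD.
    rewrite hm; field; lra.
  rewrite e lnM ?lnV ?posrE ?invr_gt0 ?ltr0n // in h.
  have hi : (n.+1%:R : R)^-1 < 1 by rewrite invf_lt1 ?ltr1n ?ltr0n.
  have hh : -1 < - (n.+1%:R : R)^-1 by rewrite ltrN2.
  have h2 := h hh.
  by rewrite -lerN2 opprB.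
apply: le_trans (lerD IH key) _.
rewrite -addrA; apply: lerD => //.
by rewrite addrC subrK.
Qed.

Lemma Theta_ge0 (R : realType) (Theta : R -> R) :
  (forall a b : R, 0 <= a -> a <= b -> Theta b <= Theta a) ->
  (lebesgue_measure).-integrable `[1, +oo[%classic
        (fun r : R => (Theta r * r ^+ 2)%:E) ->
  forall b, 0 <= b -> 0 <= Theta b.
Proof.
move=> hdec /integrableP [mf fint] b b0.
rewrite leNgt; apply/negP => hb.
set a := Num.max b 1.
have a1 : 1 <= a by rewrite le_max lexx orbT.
have ab : b <= a by rewrite le_max lexx.
have sub : `[a, +oo[%classic `<=` `[1, +oo[%classic.
  move=> r /=; rewrite !in_itv /= !andbT => ar; exact: le_trans ar.
have mabs : measurable_fun (`[1, +oo[%classic : set R) (fun r => `|(Theta r * r ^+ 2)%:E|)%E.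
  by apply: measurableT_comp => //.
have h1 : (\int[lebesgue_measure]_(x in `[a, +oo[%classic) (cst (- Theta b)%:E) x
    <= \int[lebesgue_measure]_(x in `[a, +oo[%classic) `|(Theta x * x ^+ 2)%:E|)%E.
  apply: ge0_le_integral.
  - exact: measurable_itv.
  - by move=> x _ /=; rewrite lee_fin; lra.
  - exact: measurable_cst.
  - apply: measurable_funS mabs => //; exact: measurable_itv.
  move=> x; rewrite /= in_itv /= andbT => ax.
  rewrite lee_fin.
  have tx : Theta x <= Theta b by apply: hdec => //; exact: le_trans ab ax.
  have x1 : 1 <= x by exact: le_trans a1 ax.
  have x2 : 1 <= x ^+ 2 by rewrite expr_ge1 //; lra.
  rewrite normrM (ger0_norm (x := x ^+ 2)); last lra.
  rewrite ler0_norm; last lra.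
  nra.
have h2 := ge0_subset_integral lebesgue_measure (measurable_itv `[a, +oo[) (measurable_itv `[1, +oo[)
   mabs (fun x _ => abse_ge0 _) sub.
rewrite integral_cst in h1; last exact: measurable_itv.
have h3 : ((- Theta b)%:E * lebesgue_measure (`[a, +oo[%classic : set R) = +oo)%E.
  rewrite lebesgue_measure_itv /= ltry /= mulry gtr0_sg ?mul1e //; lra.
have h4 : (+oo <= \int[lebesgue_measure]_(x in (`[1%R, +oo[%classic : set R)) `|(Theta x * x ^+ 2)%:E|)%E.
  rewrite -h3; exact: le_trans h1 h2.
have := le_lt_trans h4 fint.
by rewrite ltxx.
Qed.

Section Core.
Context d (X : measurableType d) (R : realType) (mu : probability X R)
  (A : nat -> set X) (N : nat).
Hypothesis mA : forall m, measurable (A m).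

Definition allA (P : seq nat) : set X := [set x | forall m, m \in P -> A m x].

Lemma allA_cons m P : allA (m :: P) = A m `&` allA P.
Proof.
apply/seteqP; split => x /=.
  by move=> h; split; [apply: h; rewrite inE eqxx | move=> k kP; apply: h; rewrite inE kP orbT].
by move=> [h1 h2] k; rewrite inE => /orP [/eqP -> //|]; exact: h2.
Qed.

Lemma mallA P : measurable (allA P).
Proof.
elim: P => [|m P IH].
  rewrite (_ : allA [::] = setT); first exact: measurableT.
  by apply/seteqP; split => x //= _ m.
rewrite allA_cons; exact: measurableI.
Qed.

Lemma allA_rcons P m x : allA (rcons P m) x <-> allA P x /\ A m x.
Proof.
split.
  move=> h; split; first by move=> k kP; apply: h; rewrite mem_rcons inE kP orbT.
  by apply: h; rewrite mem_rcons inE eqxx.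
by move=> [h1 h2] k; rewrite mem_rcons inE => /orP [/eqP -> //|]; exact: h1.
Qed.

Fixpoint Hf (k a : nat) (P : seq nat) : X -> R :=
  match k with
  | 0 => \1_(allA P)
  | k'.+1 => fun x => \sum_(a <= m < N.+1) Hf k' m.+1 (rcons P m) x
  end.

Lemma Hf_ge0 k a P x : 0 <= Hf k a P x.
Proof.
elim: k a P => [|k IH] a P /=; first by rewrite /indic ler0n.
by apply: sumr_ge0 => m _; exact: IH.
Qed.

Lemma Hf_meas k a P : measurable_fun setT (Hf k a P).
Proof.
elim: k a P => [|k IH] a P /=; first by apply: measurable_indic; exact: mallA.
by apply: measurable_sum => m; exact: IH.
Qed.

Lemma Hf_eq k a P x :
  Hf k a P x = \1_(allA P) x * (chains (fun m => `[< A m x >]) N k a)%:R.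
Proof.
elim: k a P => [|k IH] a P /=; first by rewrite mulr1.
rewrite natr_sum mulr_sumr; apply: eq_bigr => m _.
rewrite IH natrM mulrA; congr (_ * _).
rewrite /indic.
have e1 : (x \in allA (rcons P m)) = (x \in allA P) && `[< A m x >].
  apply/idP/andP.
  - rewrite in_setE => /allA_rcons [h1 h2]; split; [by rewrite in_setE | exact/asboolP].
  - by move=> [h1 /asboolP h2]; rewrite in_setE; apply/allA_rcons; split => //; rewrite -in_setE.
by rewrite e1; case: (x \in allA P); case: `[< A m x >]; rewrite /= ?mul1r ?mul0r.
Qed.

Definition wt (P : seq nat) : R :=
  \prod_(1 <= j < (size P).+1) ((nth 0 (0 :: P) j - nth 0 (0 :: P) j.-1)%:R)^-1.

Lemma wt_ge0 P : 0 <= wt P.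
Proof. by apply: prodr_ge0 => j _; rewrite invr_ge0. Qed.

Lemma nth_size_last P : nth 0%N (0%N :: P) (size P) = last 0%N P.
Proof. by have := nth_last 0%N (0%N :: P). Qed.

Lemma wt_rcons P m : wt (rcons P m) = wt P * ((m - last 0%N P)%:R)^-1.
Proof.
rewrite /wt size_rcons big_nat_recr //=; congr (_ * _).
  apply: eq_big_nat => j /andP [j1 j2].
  rewrite -!rcons_cons !nth_rcons /=.
  have -> : (j < (size P).+1)%N by lia.
  by have -> : (j.-1 < (size P).+1)%N by lia.
rewrite -rcons_cons nth_rcons /= ltnn eqxx.
by rewrite -rcons_cons nth_rcons /= ltnSn nth_size_last.
Qed.

Definition Hs : R := \sum_(1 <= g < N.+1) (g%:R)^-1.

Lemma Hs_ge0 : 0 <= Hs.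
Proof. by apply: sumr_ge0 => g _; rewrite invr_ge0. Qed.

Lemma sum_shift l a : (l < a)%N ->
  \sum_(a <= m < N.+1) ((m - l)%:R : R)^-1 <= Hs.
Proof.
move=> la.
case: (leqP a N.+1) => aN; last by rewrite big_geq ?Hs_ge0 //; lia.
rewrite -{1}[a]add0n big_addn /Hs big_add1 /=.
have K : (N.+1 - a <= N)%N by lia.
rewrite [X in _ <= X](@big_cat_nat _ _ _ (N.+1 - a)) //=.
rewrite -[X in X <= _]addr0; apply: lerD; last first.
  by apply: sumr_ge0 => i _; rewrite invr_ge0.
apply: ler_sum => i _.
rewrite lef_pV2 ?posrE ?ltr0n ?ler_nat //; lia.
Qed.

Variables (p : nat) (M : R).
Hypothesis M0 : 0 <= M.
Hypothesis hbase : forall P, path ltn 0%N P -> size P = p ->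
  (mu (allA P) <= (M * wt P)%:E)%E.

Lemma Hf_int k : forall a P, path ltn 0%N P -> (last 0%N P < a)%N ->
  (size P + k = p)%N ->
  (\int[mu]_x (Hf k a P x)%:E <= (M * wt P * Hs ^+ k)%:E)%E.
Proof.
elim: k => [|k IH] a P hP hl hs /=.
  rewrite integral_indic //; last exact: mallA.
  rewrite setIT.
  by rewrite expr0 mulr1; apply: hbase => //; lia.
under eq_integral => x _ do rewrite -sumEFin.
rewrite ge0_integral_sum //; first last.
- by move=> m x _; rewrite lee_fin; exact: Hf_ge0.
- by move=> m; apply/measurable_EFinP; exact: Hf_meas.
rewrite big_nat_cond.
apply: le_trans.
  apply: lee_sum => m /andP [/andP [am mN] _].
  apply: (IH m.+1 (rcons P m)).
  - by rewrite rcons_path hP /=; lia.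
  - by rewrite last_rcons.
  - by rewrite size_rcons; lia.
rewrite -big_nat_cond sumEFin lee_fin.
under eq_bigr => m _ do rewrite wt_rcons.
have -> : \sum_(a <= i < N.+1) (M * (wt P * ((i - last 0%N P)%:R)^-1) * Hs ^+ k)
   = M * wt P * Hs ^+ k * \sum_(a <= i < N.+1) ((i - last 0%N P)%:R)^-1.
  by rewrite mulr_sumr; apply: eq_bigr => m _; rewrite !mulrA [in RHS]mulrAC.
rewrite exprS [Hs * _]mulrC mulrA.
apply: ler_wpM2l; last exact: sum_shift.
apply: mulr_ge0; [apply: mulr_ge0 => //; exact: wt_ge0 | exact: exprn_ge0 Hs_ge0].
Qed.

End Core.

Section Meas.
Context d (X : measurableType d) (R : realType) (f : X -> X) (tau : X -> R * R) (t : R * R).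
Hypothesis mf : measurable_fun setT f.
Hypothesis mt1 : measurable_fun setT (fun x => (tau x).1).
Hypothesis mt2 : measurable_fun setT (fun x => (tau x).2).

Lemma miter k : measurable_fun setT (iter k f).
Proof.
elim: k => [|k IH] /=; first exact: measurable_id.
exact: (measurableT_comp mf IH).
Qed.

Lemma mb1 n : measurable_fun setT (fun x => (birkhoff f tau n x).1).
Proof.
rewrite /birkhoff /=; apply: measurable_sum => k.
exact: (measurableT_comp mt1 (miter k)).
Qed.

Lemma mb2 n : measurable_fun setT (fun x => (birkhoff f tau n x).2).
Proof.
rewrite /birkhoff /=; apply: measurable_sum => k.
exact: (measurableT_comp mt2 (miter k)).
Qed.

Lemma mpre (g : X -> R) (S : set R) : measurable_fun setT g -> measurable S ->
  measurable [set x | S (g x)].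
Proof. by move=> mg mS; have := mg measurableT S mS; rewrite setTI. Qed.

Lemma sqrt_le1 (y : R) : (Num.sqrt y <= 1) = (y <= 1).
Proof. by rewrite -{1}sqrtr1 ler_sqrt. Qed.

Definition Aset m := [set x | dist2 (birkhoff f tau m x) t <= 1].

Lemma mAset m : measurable (Aset m).
Proof.
rewrite (_ : Aset m = [set x | (`]-oo, 1]%classic : set R)
   (((birkhoff f tau m x).1 - t.1) ^+ 2 + ((birkhoff f tau m x).2 - t.2) ^+ 2)]).
  apply: mpre; last exact: measurable_itv.
  apply: measurable_funD; apply: measurable_funX; apply: measurable_funB;
    by [exact: mb1 | exact: mb2 | exact: measurable_cst].
by apply/seteqP; split => x; rewrite /Aset /dist2 /= in_itv /= sqrt_le1.
Qed.

Definition Cset c m := [set x | unit_cube c (birkhoff f tau m x)].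

Lemma mCset c m : measurable (Cset c m).
Proof.
rewrite (_ : Cset c m = [set x | (`[c.1 - 2^-1, c.1 + 2^-1]%classic : set R) ((birkhoff f tau m x).1)]
   `&` [set x | (`[c.2 - 2^-1, c.2 + 2^-1]%classic : set R) ((birkhoff f tau m x).2)]).
  apply: measurableI; apply: mpre; by [exact: mb1 | exact: mb2 | exact: measurable_itv].
by apply/seteqP; split => x; rewrite /Cset /unit_cube /= !in_itv /= ![`|_ - c.1|]distrC ![`|_ - c.2|]distrC !ler_distlC.
Qed.

Definition Sset (n : nat -> nat) (c : nat -> R * R) (s : nat) :=
  [set x | forall j, (1 <= j <= s)%N -> unit_cube (c j) (birkhoff f tau (n j) x)].

Lemma mSset n c s : measurable (Sset n c s).
Proof.
rewrite (_ : Sset n c s = \bigcap_j (if (1 <= j <= s)%N then Cset (c j) (n j) else setT)).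
  apply: bigcapT_measurable => j; case: ifP => _; [exact: mCset | exact: measurableT].
apply/seteqP; split => x /=.
  by move=> h j _; case: ifP => hj //; exact: h.
by move=> h j hj; have := h j I; rewrite hj.
Qed.

End Meas.

Section HB.
Context d (X : measurableType d) (R : realType) (f : X -> X) (tau : X -> R * R) (t : R * R).
Hypothesis mf : measurable_fun setT f.
Hypothesis mt1 : measurable_fun setT (fun x => (tau x).1).
Hypothesis mt2 : measurable_fun setT (fun x => (tau x).2).

Definition off (i : 'I_3) : R := i%:R - 1.
Definition sel (r : R) : 'I_3 :=
  if r < - 2^-1 then ord0 else if r <= 2^-1 then inord 1 else inord 2.

Lemma sel_ok r : `|r| <= 1 -> `|r - off (sel r)| <= 2^-1.
Proof.
rewrite !ler_norml => /andP [h1 h2].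
rewrite /sel /off; case: ifP => ha; [|case: ifP => hb]; rewrite /= ?inordK //;
  apply/andP; split; lra.
Qed.

Lemma dist_le1 (u : R * R) : dist2 u t <= 1 -> `|u.1 - t.1| <= 1 /\ `|u.2 - t.2| <= 1.
Proof.
rewrite /dist2 sqrt_le1 => h.
have h1 : 0 <= (u.1 - t.1) ^+ 2 by exact: sqr_ge0.
have h2 : 0 <= (u.2 - t.2) ^+ 2 by exact: sqr_ge0.
split; rewrite -(ler_pXn2r (n := 2)) ?nnegrE ?normr_ge0 // ?expr1n real_normK ?num_real //; lra.
Qed.


Lemma bigmax_ge0 (F : nat -> R) (a b : nat) : 0 <= \big[Num.max/0]_(a <= j < b) F j.
Proof. by elim/big_rec: _ => // i x _ hx; rewrite le_max hx orbT. Qed.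

Lemma hbase (mu : probability X R) (p' : nat) (K : R) (Theta : R -> R)
  (hdec : forall a b : R, 0 <= a -> a <= b -> Theta b <= Theta a)
  (hpos : forall b : R, 0 <= b -> 0 <= Theta b)
  (hK : forall (n : nat -> nat) (c : nat -> R * R),
      n 0%N = 0%N -> c 0%N = (0, 0) ->
      (forall j, (j < p'.+1)%N -> (n j < n j.+1)%N) ->
      (mu [set x | forall j, (1 <= j <= p'.+1)%N ->
                     unit_cube (c j) (birkhoff f tau (n j) x)]
       <= (K * (\prod_(1 <= j < p'.+2) ((n j - n j.-1)%:R)^-1)
             * Theta (\big[Num.max/0]_(1 <= j < p'.+2)
                        (dist2 (c j) (c j.-1) / Num.sqrt ((n j - n j.-1)%:R))))%:E)%E)
  (P : seq nat) : path ltn 0%N P -> size P = p'.+1 ->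
  (mu (allA (Aset f tau t) P)
     <= (#|{ffun 'I_p'.+1 -> 'I_3 * 'I_3}|%:R * (`|K| * Theta 0) * wt R P)%:E)%E.
Proof.
move=> hP hs.
pose W := ({ffun 'I_p'.+1 -> 'I_3 * 'I_3} : finType).
pose nn := fun j => nth 0%N (0%N :: P) j.
pose c := fun (w : W) (j : nat) => if j is j'.+1 then
   (t.1 + off (w (inord j')).1, t.2 + off (w (inord j')).2) else (0 : R, 0 : R).
have hn0 : nn 0%N = 0%N by [].
have hinc : forall j, (j < p'.+1)%N -> (nn j < nn j.+1)%N.
  move=> j hj; apply: (sorted_ltn_nth ltn_trans 0%N (hP : sorted ltn (0%N :: P)));
    rewrite ?inE /= ?hs //; lia.
pose B := `|K| * Theta 0 * wt R P.
have hB : forall w, (mu (Sset f tau nn (c w) p'.+1) <= B%:E)%E.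
  move=> w; apply: le_trans (hK nn (c w) hn0 erefl hinc) _.
  rewrite lee_fin /B /wt hs.
  set m := \big[Num.max/0]_(1 <= j < p'.+2) _.
  set W0 := \prod_(1 <= j < p'.+2) _.
  have m0 : 0 <= m by exact: bigmax_ge0.
  have W00 : 0 <= W0 by apply: prodr_ge0 => j _; rewrite invr_ge0.
  have t1 := hdec 0 m (lexx 0) m0.
  have t2 := hpos m m0.
  apply: (@le_trans _ _ (`|K| * W0 * Theta m)).
    apply: ler_wpM2r => //; apply: ler_wpM2r => //; exact: ler_norm.
  rewrite [X in _ <= X]mulrAC; apply: ler_wpM2l => //.
  by apply: mulr_ge0 => //; exact: normr_ge0.
pose w0 : W := [ffun => (ord0, ord0)].
pose F := fun k => Sset f tau nn (c (nth w0 (enum W) k)) p'.+1.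
have cov : allA (Aset f tau t) P `<=` \big[setU/set0]_(k < #|W|) F k.
  move=> x hx; rewrite -bigcup_mkord.
  pose w : W := [ffun i : 'I_p'.+1 =>
     (sel ((birkhoff f tau (nn i.+1) x).1 - t.1), sel ((birkhoff f tau (nn i.+1) x).2 - t.2))].
  exists (index w (enum W)); first by rewrite /= cardE index_mem mem_enum.
  rewrite /F nth_index ?mem_enum //.
  move=> [//|j'] /andP [_ jp].
  have jP : (j' < size P)%N by rewrite hs.
  have hA := hx _ (mem_nth 0%N jP).
  have [d1 d2] := dist_le1 hA.
  rewrite /c /unit_cube /= ffunE /= inordK //.
  by split; [move: (sel_ok d1) | move: (sel_ok d2)]; rewrite /off /birkhoff /= !opprD !addrA.
have := content_subadditive mu (fun k _ => mSset mf mt1 mt2 nn (c (nth w0 (enum W) k)) p'.+1)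
   (mallA (mAset t mf mt1 mt2) P) cov.
move=> h; apply: le_trans h _.
apply: le_trans.
  apply: lee_sum => k _; exact: hB.
rewrite sumEFin lee_fin sumr_const card_ord -[B *+ _]mulr_natl.
by rewrite /B !mulrA.
Qed.

End HB.

Lemma count_nat (a : pred nat) (s : seq nat) : count a s = (\sum_(n <- s) a n)%N.
Proof. by elim: s => [|m s IH]; rewrite ?big_nil ?big_cons //= IH. Qed.

Lemma count_natr (R : realType) (a : pred nat) (s : seq nat) :
  ((count a s)%:R : R) = \sum_(n <- s) ((a n)%:R : R).
Proof. by elim: s => [|m s IH]; rewrite ?big_nil ?big_cons //= natrD IH. Qed.

Unset Implicit Arguments.
Set Strict Implicit.

Theorem lemma3p3 (d : measure_display) (X : measurableType d) (R : realType)
  (mu : probability X R) (f : X -> X) (tau : X -> R * R)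
  (hf : measure_preserving mu f) (herg : ergodic mu f)
  (htau1 : measurable_fun setT (fun x => (tau x).1))
  (htau2 : measurable_fun setT (fun x => (tau x).2))
  (hac : anticoncentration mu f tau) :
  forall p : nat, exists Cp : R, forall (t : R * R) (N : nat), (2 <= N)%N ->
    (\int[mu]_x (((ell f tau x t N)%:R : R) ^+ p)%:E
       <= (Cp * (ln (N%:R : R)) ^+ p)%:E)%E.
Proof.
have mf := hf.1.
case=> [|p'].
  exists 1 => t N hN; rewrite expr0 mulr1.
  have := integral_cst mu measurableT 1%:E.
  rewrite mul1e => h.
  rewrite (eq_integral (cst 1%:E)); last by move=> x _; rewrite expr0.
  rewrite h; exact: probability_le1.
set p := p'.+1.
have [K [Th [hdec [hTi hK]]]] := hac p isT.
have hpos := Theta_ge0 hdec hTi.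
pose M : R := #|{ffun 'I_p'.+1 -> 'I_3 * 'I_3}|%:R * (`|K| * Th 0).
have M0 : 0 <= M.
  apply: mulr_ge0; first exact: ler0n.
  apply: mulr_ge0; [exact: normr_ge0 | exact: hpos].
pose cn := ((2 * p) ^ p * p`!)%N.
pose c : R := cn%:R.
have c0 : 0 <= c by exact: ler0n.
pose l2 : R := ln 2.
exists (c * (l2 ^- p + M * (l2^-1 + 1) ^+ p)).
move=> t N hN.
pose A := Aset f tau t.
have mA : forall m, measurable (A m) := mAset t mf htau1 htau2.
pose Hx := Hf R A N p 1 [::].
have hb := hbase t mf htau1 htau2 hdec hpos hK.
have hI := Hf_int (mu := mu) N mA M0 hb (k := p) (a := 1%N) (P := [::]) isT isT erefl.
have wt0 : wt R [::] = 1 by rewrite /wt big_geq.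
rewrite wt0 mulr1 in hI.
have mHx : measurable_fun setT Hx := Hf_meas N mA p 1 [::].
have ellE : forall x, ((ell f tau x t N)%:R : R) = \sum_(n <- iota 0 N.+1) \1_(A n) x.
  move=> x; rewrite /ell count_natr; apply: eq_bigr => n _; rewrite /indic.
  congr (_%:R); congr (nat_of_bool _); apply/idP/idP; rewrite in_setE; exact.
have mell : measurable_fun setT (fun x => (((ell f tau x t N)%:R : R) ^+ p)%:E).
  apply/measurable_EFinP; apply: measurable_funX.
  under eq_fun do rewrite ellE.
  apply: measurable_sum => n; apply: measurable_indic; exact: mA.
have step1 : (\int[mu]_x (((ell f tau x t N)%:R : R) ^+ p)%:E
    <= \int[mu]_x (c * (1 + Hx x))%:E)%E.
  apply: ge0_le_integral.
  - exact: measurableT.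
  - by move=> x _; rewrite lee_fin; apply: exprn_ge0; exact: ler0n.
  - exact: mell.
  - apply/measurable_EFinP; apply: measurable_funM; first exact: measurable_cst.
    apply: measurable_funD; [exact: measurable_cst | exact: mHx].
  move=> x _; rewrite lee_fin.
  rewrite /Hx Hf_eq chainsE.
  have h0 : \1_(allA A [::]) x = 1 :> R.
    by rewrite /indic; have -> : x \in allA A [::] by rewrite in_setE.
  rewrite h0 mul1r -natrX.
  set T := (\sum_(1 <= m < N.+1) `[< A m x >])%N.
  have hl : (ell f tau x t N <= 1 + T)%N.
    rewrite /ell count_nat /T /index_iota subn1 /= big_cons.
    apply: leq_add; first exact: leq_b1.
    by rewrite leq_eqVlt; apply/orP; left; apply/eqP; apply: eq_bigr => n _; rewrite asboolb.
  apply: (@le_trans _ _ (((1 + T) ^ p)%:R)).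
    by rewrite ler_nat leq_exp2r.
  have e : c * (1 + ('C(T, p))%:R) = ((cn * (1 + 'C(T,p)))%:R) by rewrite natrM natrD.
  by rewrite e ler_nat; exact: pow_le_bin.
apply: le_trans step1 _.
have Hx0 : forall x, 0 <= Hx x := fun x => Hf_ge0 R A N p 1 [::] x.
have step2 : (\int[mu]_x (c * (1 + Hx x))%:E
    = c%:E * (1%:E + \int[mu]_x (Hx x)%:E))%E.
  under eq_integral do rewrite EFinM.
  rewrite ge0_integralZl_EFin //; first last.
  - apply/measurable_EFinP; apply: measurable_funD; [exact: measurable_cst | exact: mHx].
  - by move=> x _; rewrite lee_fin addr_ge0.
  congr (_ * _)%E.
  under eq_integral do rewrite EFinD.
  rewrite ge0_integralD //; first last.
  - by apply/measurable_EFinP.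
  - by move=> x _; rewrite lee_fin.
  congr (_ + _)%E.
  have := integral_cst mu measurableT 1%:E.
  rewrite mul1e => h; rewrite (eq_integral (cst 1%:E)) // h.
  exact: probability_setT.
rewrite step2.
apply: le_trans.
  apply: lee_wpmul2l; first by rewrite lee_fin.
  apply: leeD2l; exact: hI.
rewrite -EFinD -EFinM lee_fin.
have N1 : (1 <= N)%N by lia.
have hH := harm_ln R N1.
set L := ln (N%:R : R).
have l20 : 0 < l2 by apply: ln_gt0; rewrite ltr1n.
have lL : l2 <= L.
  rewrite /l2 /L ler_ln ?posrE ?ltr0n //.
  by rewrite ler_nat.
have L0 : 0 < L by exact: lt_le_trans l20 lL.
have q1 : 1 <= L / l2 by rewrite ler_pdivlMr // mul1r.
have Hs0 := Hs_ge0 R N.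
have hH2 : Hs R N <= (l2^-1 + 1) * L.
  apply: le_trans hH _.
  rewrite mulrDl mul1r; apply: lerD => //.
  by rewrite mulrC.
have hHp : Hs R N ^+ p <= ((l2^-1 + 1) * L) ^+ p.
  have r0 : 0 <= (l2^-1 + 1) * L.
    apply: mulr_ge0; last exact: ltW.
    apply: addr_ge0; [rewrite invr_ge0; exact: ltW | exact: ler01].
  by apply: lerXn2r; rewrite ?nnegrE.
have h1p : 1 <= l2 ^- p * L ^+ p.
  by rewrite -exprVn -exprMn mulrC; apply: exprn_ege1.
rewrite -mulrA; apply: ler_wpM2l => //.
rewrite mulrDl; apply: lerD; first by [].
rewrite -mulrA; apply: ler_wpM2l => //.
by rewrite -exprMn.
Qed.
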